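(* Let $(V,L,\varphi,E)$ and $(V,C,\psi,E)$ be valuation systems such that $\psi$ extends $\varphi$. Then for every ordinal number $\alpha$: if $\psi$ is $\Pi_\alpha$-extendible, then $\varphi$ is $\Pi_\alpha$-extendible and $\Pi_\alpha\psi$ extends $\Pi_\alpha\varphi$; and if $\psi$ is $\Sigma_\alpha$-extendible, then $\varphi$ is $\Sigma_\alpha$-extendible and $\Sigma_\alpha\psi$ extends $\Sigma_\alpha\varphi$.
   Context: A valuation system $(V,L,\varphi,E)$ consists of: (i) a lattice $V$ which is $\sigma$-distributive (for every $a\in V$ and sequence $(b_n)$ with existing infimum, $\bigwedge_n(a\vee b_n)$ exists and equals $a\vee\bigwedge_n b_n$, and dually for suprema); (ii) a sublattice $L$ of $V$; (iii) a partially ordered abelian group $E$ which is R-complete (whenever $x_1\ge x_2\ge\cdots$ and $y_1\ge y_2\ge\cdots$ in $E$ are such that $\bigwedge_n(x_n+y_n)$ exists, $\bigwedge_n x_n$ and $\bigwedge_n y_n$ exist; dually for increasing sequences); (iv) a valuation $\varphi:L\to E$ (order-preserving, $\varphi(a\wedge b)+\varphi(a\vee b)=\varphi(a)+\varphi(b)$). A map $\psi:C\to E$ extends $\varphi:L\to E$ if $L\subseteq C$ and $\psi|_L=\varphi$. A decreasing (resp. increasing) sequence $(a_n)$ in $L$ is $\varphi$-convergent if $\bigwedge_n a_n$ exists in $V$ and $\bigwedge_n\varphi(a_n)$ exists in $E$ (resp. with suprema). $\Pi L:=\{\bigwedge_n a_n:(a_n)\ \varphi\text{-convergent decreasing}\}$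 and $\varphi$ is $\Pi$-extendible if there is a valuation $\Pi\varphi:\Pi L\to E$ with $\Pi\varphi(\bigwedge_n a_n)=\bigwedge_n\varphi(a_n)$ for all such sequences; $\Sigma L,\Sigma$-extendible, $\Sigma\varphi$ dually. Hierarchy (transfinite recursion): $\varphi$ is $\Pi_0$- and $\Sigma_0$-extendible with $\Pi_0\varphi=\Sigma_0\varphi=\varphi$; $\varphi$ is $\Pi_{\alpha+1}$-extendible iff it is $\Sigma_\alpha$-extendible and $\Sigma_\alpha\varphi$ is $\Pi$-extendible, with $\Pi_{\alpha+1}\varphi=\Pi(\Sigma_\alpha\varphi)$; $\varphi$ is $\Sigma_{\alpha+1}$-extendible iff it is $\Pi_\alpha$-extendible and $\Pi_\alpha\varphi$ is $\Sigma$-extendible, with $\Sigma_{\alpha+1}\varphi=\Sigma(\Pi_\alpha\varphi)$; at a limit $\lambda$, $\varphi$ is $\Pi_\lambda$-extendible iff $\Pi_\alpha$-extendible for all $\alpha<\lambda$, and then $\Pi_\lambda\varphi$ is the common extension of the $\Pi_\alpha\varphi$ ($\alpha<\lambda$) on $\bigcup_{\alpha<\lambda}\Pi_\alpha L$; similarly for $\Sigma_\lambda$. The same definitions apply to $\psi$. *)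

(* Defs.v *)
From HB Require Import structures.
From mathcomp Require Import all_boot all_order all_algebra.
Set Implicit Arguments.
Unset Strict Implicit.
Unset Printing Implicit Defensive.
Import Order.TTheory GRing.Theory Num.Theory.

Local Open Scope order_scope.

Definition vs_is_inf {d} {T : porderType d} (s : nat -> T) (x : T) : Prop :=
  (forall n, x <= s n) /\ (forall y, (forall n, y <= s n) -> y <= x).

Definition vs_is_sup {d} {T : porderType d} (s : nat -> T) (x : T) : Prop :=
  (forall n, s n <= x) /\ (forall y, (forall n, s n <= y) -> x <= y).

Definition vs_decr {d} {T : porderType d} (s : nat -> T) : Prop :=
  forall n, s n.+1 <= s n.

Definition vs_incr {d} {T : porderType d} (s : nat -> T) : Prop :=
  forall n, s n <= s n.+1.

Definition sigma_distributive {d} (V : latticeType d) : Prop :=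
  (forall (a : V) (b : nat -> V) (x : V), vs_is_inf b x ->
      vs_is_inf (fun n => a `|` b n) (a `|` x)) /\
  (forall (a : V) (b : nat -> V) (x : V), vs_is_sup b x ->
      vs_is_sup (fun n => a `&` b n) (a `&` x)).

Definition sublattice {d} {V : latticeType d} (L : V -> Prop) : Prop :=
  forall a b, L a -> L b -> L (a `&` b) /\ L (a `|` b).

Definition po_group (E : porderZmodType) : Prop :=
  forall x y z : E, x <= y -> (x + z)%R <= (y + z)%R.

Definition R_complete (E : porderZmodType) : Prop :=
  (forall (x y : nat -> E), vs_decr x -> vs_decr y ->
     (exists s, vs_is_inf (fun n => x n + y n)%R s) ->
     (exists a, vs_is_inf x a) /\ (exists b, vs_is_inf y b)) /\
  (forall (x y : nat -> E), vs_incr x -> vs_incr y ->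
     (exists s, vs_is_sup (fun n => x n + y n)%R s) ->
     (exists a, vs_is_sup x a) /\ (exists b, vs_is_sup y b)).

(* (iv) valuations.  A (partial) map D -> E is represented by a domain *)
(* predicate D : V -> Prop together with a total function f : V -> E;   *)
(* only the values of f on D are relevant.                              *)

Section Valuations.
Context {d : Order.disp_t} {V : latticeType d} {E : porderZmodType}.

Definition is_valuation (D : V -> Prop) (f : V -> E) : Prop :=
  sublattice D /\
  (forall a b, D a -> D b -> a <= b -> f a <= f b) /\
  (forall a b, D a -> D b -> (f (a `&` b) + f (a `|` b) = f a + f b)%R).

Definition valuation_system (L : V -> Prop) (phi : V -> E) : Prop :=
  sigma_distributive V /\ po_group E /\ R_complete E /\ is_valuation L phi.

Definition extends (L : V -> Prop) (phi : V -> E)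
                   (C : V -> Prop) (psi : V -> E) : Prop :=
  (forall x, L x -> C x) /\ (forall x, L x -> psi x = phi x).

Definition PiDom (L : V -> Prop) (phi : V -> E) (x : V) : Prop :=
  exists a : nat -> V, vs_decr a /\ (forall n, L (a n)) /\ vs_is_inf a x /\
    exists e, vs_is_inf (fun n => phi (a n)) e.

Definition SigmaDom (L : V -> Prop) (phi : V -> E) (x : V) : Prop :=
  exists a : nat -> V, vs_incr a /\ (forall n, L (a n)) /\ vs_is_sup a x /\
    exists e, vs_is_sup (fun n => phi (a n)) e.

Definition PiExt (L : V -> Prop) (phi : V -> E) (g : V -> E) : Prop :=
  is_valuation (PiDom L phi) g /\
  forall (a : nat -> V) x e, vs_decr a -> (forall n, L (a n)) ->
    vs_is_inf a x -> vs_is_inf (fun n => phi (a n)) e -> g x = e.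

Definition SigmaExt (L : V -> Prop) (phi : V -> E) (g : V -> E) : Prop :=
  is_valuation (SigmaDom L phi) g /\
  forall (a : nat -> V) x e, vs_incr a -> (forall n, L (a n)) ->
    vs_is_sup a x -> vs_is_sup (fun n => phi (a n)) e -> g x = e.

Definition Pi_extendible (L : V -> Prop) (phi : V -> E) : Prop :=
  exists g, PiExt L phi g.

Definition Sigma_extendible (L : V -> Prop) (phi : V -> E) : Prop :=
  exists g, SigmaExt L phi g.

(* The transfinite hierarchy.  Ordinals are represented as elements of *)
(* an arbitrary well-ordered type T (a total order whose strict order   *)
(* is well founded); stage alpha only depends on the order type of the  *)
(* initial segment below alpha.                                         *)

Record stage := Stage {
  piOK : Prop;            (* phi is Pi_alpha-extendible    *)
  piD  : V -> Prop;       (* Pi_alpha L                    *)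
  pif  : V -> E;          (* Pi_alpha phi (on Pi_alpha L)  *)
  sgOK : Prop;            (* phi is Sigma_alpha-extendible *)
  sgD  : V -> Prop;       (* Sigma_alpha L                 *)
  sgf  : V -> E           (* Sigma_alpha phi               *)
}.

Definition same_map (D : V -> Prop) (f : V -> E) (D' : V -> Prop) (f' : V -> E)
  : Prop := (forall x, D x <-> D' x) /\ (forall x, D x -> f x = f' x).

Context {dT : Order.disp_t} {T : orderType dT}.

Definition is_zero (a : T) : Prop := forall b, ~ (b < a).
Definition succ_of (b a : T) : Prop := b < a /\ forall c, c < a -> c <= b.
Definition is_limit (a : T) : Prop :=
  ~ is_zero a /\ forall b, b < a -> exists c, b < c /\ c < a.

Definition hierarchy (L : V -> Prop) (phi : V -> E) (F : T -> stage) : Prop :=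
  forall a : T,
  (is_zero a ->
     piOK (F a) /\ same_map (piD (F a)) (pif (F a)) L phi /\
     sgOK (F a) /\ same_map (sgD (F a)) (sgf (F a)) L phi) /\
  (forall b, succ_of b a ->
     (piOK (F a) <-> sgOK (F b) /\ Pi_extendible (sgD (F b)) (sgf (F b))) /\
     (piOK (F a) ->
        (forall x, piD (F a) x <-> PiDom (sgD (F b)) (sgf (F b)) x) /\
        PiExt (sgD (F b)) (sgf (F b)) (pif (F a))) /\
     (sgOK (F a) <-> piOK (F b) /\ Sigma_extendible (piD (F b)) (pif (F b))) /\
     (sgOK (F a) ->
        (forall x, sgD (F a) x <-> SigmaDom (piD (F b)) (pif (F b)) x) /\
        SigmaExt (piD (F b)) (pif (F b)) (sgf (F a)))) /\
  (is_limit a ->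
     (piOK (F a) <-> forall b, b < a -> piOK (F b)) /\
     (piOK (F a) ->
        (forall x, piD (F a) x <-> exists2 b, b < a & piD (F b) x) /\
        (forall b x, b < a -> piD (F b) x -> pif (F a) x = pif (F b) x)) /\
     (sgOK (F a) <-> forall b, b < a -> sgOK (F b)) /\
     (sgOK (F a) ->
        (forall x, sgD (F a) x <-> exists2 b, b < a & sgD (F b) x) /\
        (forall b x, b < a -> sgD (F b) x -> sgf (F a) x = sgf (F b) x))).

Definition Pi_alpha_extendible (L : V -> Prop) (phi : V -> E) (a : T) : Prop :=
  exists F, hierarchy L phi F /\ piOK (F a).

Definition Sigma_alpha_extendible (L : V -> Prop) (phi : V -> E) (a : T) : Prop :=
  exists F, hierarchy L phi F /\ sgOK (F a).

End Valuations.

(* Main.v *)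
Require Import Defs.
From HB Require Import structures.
From mathcomp Require Import all_boot all_order all_algebra.
From Stdlib Require Import Classical ClassicalEpsilon FunctionalExtensionality.
Import Order.TTheory GRing.Theory.
Local Open Scope order_scope.
Section EGroup.
Context {E : porderZmodType} (HE : po_group E).

Lemma poD_r (x y z : E) : x <= y -> (z + x)%R <= (z + y)%R.
Proof. by move=> h; rewrite ![(z + _)%R]addrC; apply: HE. Qed.

Lemma poD2 (x y z t : E) : x <= y -> z <= t -> (x + z)%R <= (y + t)%R.
Proof. move=> h1 h2; apply: le_trans (HE _ _ _ h1) _; exact: poD_r. Qed.

Lemma po_subl (x y z : E) : (x + y)%R <= z -> x <= (z - y)%R.
Proof. by move=> h; have := HE _ _ (- y)%R h; rewrite addrK. Qed.

Lemma po_subr (x y z : E) : z <= (x + y)%R -> (z - y)%R <= x.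
Proof. by move=> h; have := HE _ _ (- y)%R h; rewrite addrK. Qed.

Lemma decr_le {d} {T : porderType d} (s : nat -> T) : vs_decr s ->
  forall m n, (m <= n)%N -> s n <= s m.
Proof.
move=> hs m n /subnK <-; elim: (n - m)%N => [|k ih] //.
by rewrite addSn; apply: le_trans (hs _) ih.
Qed.

Lemma incr_le {d} {T : porderType d} (s : nat -> T) : vs_incr s ->
  forall m n, (m <= n)%N -> s m <= s n.
Proof.
move=> hs m n /subnK <-; elim: (n - m)%N => [|k ih] //.
by rewrite addSn; apply: le_trans ih (hs _).
Qed.

Lemma inf_add (x y : nat -> E) a b : vs_decr x -> vs_decr y ->
  vs_is_inf x a -> vs_is_inf y b -> vs_is_inf (fun n => x n + y n)%R (a + b)%R.
Proof.
move=> dx dy [xa xg] [yb yg]; split=> [n|z hz]; first exact: poD2.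
have h1 : forall n, (z - y n)%R <= a.
  move=> n; apply: xg => m; apply: po_subr.
  case: (leqP m n) => hmn.
    apply: le_trans (hz n) _; apply: HE; exact: decr_le.
  apply: le_trans (hz m) _; apply: poD_r; apply: decr_le => //; exact: ltnW.
have h2 : (z - a)%R <= b.
  apply: yg => n; apply: po_subr; have := HE _ _ (y n) (h1 n); by rewrite subrK addrC.
by have := HE _ _ a h2; rewrite subrK addrC.
Qed.

Lemma sup_add (x y : nat -> E) a b : vs_incr x -> vs_incr y ->
  vs_is_sup x a -> vs_is_sup y b -> vs_is_sup (fun n => x n + y n)%R (a + b)%R.
Proof.
move=> dx dy [xa xg] [yb yg]; split=> [n|z hz]; first exact: poD2.
have h1 : forall n, a <= (z - y n)%R.
  move=> n; apply: xg => m;   apply: po_subl.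
  case: (leqP m n) => hmn.
    apply: le_trans _ (hz n); apply: HE; exact: incr_le.
  apply: le_trans _ (hz m); apply: poD_r; apply: incr_le => //; exact: ltnW.
have h2 : b <= (z - a)%R.
  apply: yg => n; apply: po_subl; have := HE _ _ (y n) (h1 n); by rewrite subrK addrC.
by have := HE _ _ a h2; rewrite subrK addrC.
Qed.
End EGroup.
Section Lat.
Context {d : Order.disp_t} {V : latticeType d} {E : porderZmodType}.
Context (HV : sigma_distributive V) (HE : po_group E) (HR : R_complete E).

Lemma inf_meet (a b : nat -> V) x y : vs_is_inf a x -> vs_is_inf b y ->
  vs_is_inf (fun n => a n `&` b n) (x `&` y).
Proof.
move=> [ax ag] [bx bg]; split=> [n|z hz]; first exact: leI2.
rewrite lexI; apply/andP; split.
  by apply: ag => n; apply: le_trans (hz n) _; exact: leIl.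
by apply: bg => n; apply: le_trans (hz n) _; exact: leIr.
Qed.

Lemma sup_join (a b : nat -> V) x y : vs_is_sup a x -> vs_is_sup b y ->
  vs_is_sup (fun n => a n `|` b n) (x `|` y).
Proof.
move=> [ax ag] [bx bg]; split=> [n|z hz]; first exact: leU2.
rewrite leUx; apply/andP; split.
  by apply: ag => n; apply: le_trans _ (hz n); exact: leUl.
by apply: bg => n; apply: le_trans _ (hz n); exact: leUr.
Qed.

Lemma inf_join (a b : nat -> V) x y : vs_decr a -> vs_decr b ->
  vs_is_inf a x -> vs_is_inf b y ->
  vs_is_inf (fun n => a n `|` b n) (x `|` y).
Proof.
move=> da db ha hb; split=> [n|z hz]; first by apply: leU2; [apply ha.1|apply hb.1].
have h1 : forall n, z <= y `|` a n.
  move=> n; rewrite joinC; apply: (HV.1 (a n) b y hb).2 => m.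
  case: (leqP m n) => hmn.
    apply: le_trans (hz n) _; apply: leU2 => //; exact: decr_le.
  apply: le_trans (hz m) _; apply: leU2 => //; apply: decr_le => //; exact: ltnW.
rewrite joinC; exact: (HV.1 y a x ha).2.
Qed.

Lemma sup_meet (a b : nat -> V) x y : vs_incr a -> vs_incr b ->
  vs_is_sup a x -> vs_is_sup b y ->
  vs_is_sup (fun n => a n `&` b n) (x `&` y).
Proof.
move=> da db ha hb; split=> [n|z hz]; first by apply: leI2; [apply ha.1|apply hb.1].
have h1 : forall n, y `&` a n <= z.
  move=> n; rewrite meetC; apply: (HV.2 (a n) b y hb).2 => m.
  case: (leqP m n) => hmn.
    apply: le_trans _ (hz n); apply: leI2 => //; exact: incr_le.
  apply: le_trans _ (hz m); apply: leI2 => //; apply: incr_le => //; exact: ltnW.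
rewrite meetC; exact: (HV.2 y a x ha).2.
Qed.

Lemma PiDom_sub (D : V -> Prop) (f : V -> E) :
  is_valuation D f -> sublattice (PiDom D f).
Proof.
move=> [sD [mD vD]] x y [a [da [Da [ia [ea iea]]]]] [b [db [Db [ib [eb ieb]]]]].
have Du n : D (a n `&` b n) by exact: (sD _ _ (Da n) (Db n)).1.
have Dw n : D (a n `|` b n) by exact: (sD _ _ (Da n) (Db n)).2.
have dfa : vs_decr (fun n => f (a n)) by move=> n; apply: mD.
have dfb : vs_decr (fun n => f (b n)) by move=> n; apply: mD.
have du : vs_decr (fun n => a n `&` b n) by move=> n; apply: leI2.
have dw : vs_decr (fun n => a n `|` b n) by move=> n; apply: leU2.
have dfu : vs_decr (fun n => f (a n `&` b n)) by move=> n; apply: mD.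
have dfw : vs_decr (fun n => f (a n `|` b n)) by move=> n; apply: mD.
have hs := inf_add HE _ _ _ _ dfa dfb iea ieb.
have hex : exists s, vs_is_inf (fun n => f (a n `&` b n) + f (a n `|` b n))%R s.
  exists (ea + eb)%R.
  have -> : (fun n => f (a n `&` b n) + f (a n `|` b n))%R = (fun n => f (a n) + f (b n))%R.
    by apply: functional_extensionality => n; apply: vD.
  exact: hs.
have [[eu hu] [ew hw]] := HR.1 _ _ dfu dfw hex.
split.
  exists (fun n => a n `&` b n); do 3 (split => //); first exact: inf_meet.
  by exists eu.
exists (fun n => a n `|` b n); do 3 (split => //); first exact: inf_join.
by exists ew.
Qed.

Lemma SigmaDom_sub (D : V -> Prop) (f : V -> E) :
  is_valuation D f -> sublattice (SigmaDom D f).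
Proof.
move=> [sD [mD vD]] x y [a [da [Da [ia [ea iea]]]]] [b [db [Db [ib [eb ieb]]]]].
have Du n : D (a n `&` b n) by exact: (sD _ _ (Da n) (Db n)).1.
have Dw n : D (a n `|` b n) by exact: (sD _ _ (Da n) (Db n)).2.
have dfa : vs_incr (fun n => f (a n)) by move=> n; apply: mD.
have dfb : vs_incr (fun n => f (b n)) by move=> n; apply: mD.
have du : vs_incr (fun n => a n `&` b n) by move=> n; apply: leI2.
have dw : vs_incr (fun n => a n `|` b n) by move=> n; apply: leU2.
have dfu : vs_incr (fun n => f (a n `&` b n)) by move=> n; apply: mD.
have dfw : vs_incr (fun n => f (a n `|` b n)) by move=> n; apply: mD.
have hs := sup_add HE _ _ _ _ dfa dfb iea ieb.
have hex : exists s, vs_is_sup (fun n => f (a n `&` b n) + f (a n `|` b n))%R s.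
  exists (ea + eb)%R.
  have -> : (fun n => f (a n `&` b n) + f (a n `|` b n))%R = (fun n => f (a n) + f (b n))%R.
    by apply: functional_extensionality => n; apply: vD.
  exact: hs.
have [[eu hu] [ew hw]] := HR.2 _ _ dfu dfw hex.
split.
  exists (fun n => a n `&` b n); do 3 (split => //); first exact: sup_meet.
  by exists eu.
exists (fun n => a n `|` b n); do 3 (split => //); first exact: sup_join.
by exists ew.
Qed.

Lemma K_pi (D D' : V -> Prop) (f f' g : V -> E) :
  is_valuation D f -> (forall x, D x -> D' x) -> (forall x, D x -> f' x = f x) ->
  PiExt D' f' g -> PiExt D f g /\ (forall x, PiDom D f x -> PiDom D' f' x).
Proof.
move=> vf DD ff [[sD' [mD' vD']] hg].
have inc : forall x, PiDom D f x -> PiDom D' f' x.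
  move=> x [a [da [Da [ia [e ie]]]]]; exists a; split=> //; split; first by move=> n; apply: DD.
  split=> //.
  exists e; have -> : (fun n => f' (a n)) = (fun n => f (a n)) => //.
  by apply: functional_extensionality => n; apply: ff.
split=> //; split.
  split; first exact: PiDom_sub.
  split=> u v hu hv; [apply: mD'|apply: vD']; exact: inc.
move=> a x e da Da ia ie; apply: (hg a x e da) => //; first by move=> n; apply: DD.
have -> : (fun n => f' (a n)) = (fun n => f (a n)) => //.
by apply: functional_extensionality => n; apply: ff.
Qed.

Lemma K_sg (D D' : V -> Prop) (f f' g : V -> E) :
  is_valuation D f -> (forall x, D x -> D' x) -> (forall x, D x -> f' x = f x) ->
  SigmaExt D' f' g -> SigmaExt D f g /\ (forall x, SigmaDom D f x -> SigmaDom D' f' x).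
Proof.
move=> vf DD ff [[sD' [mD' vD']] hg].
have inc : forall x, SigmaDom D f x -> SigmaDom D' f' x.
  move=> x [a [da [Da [ia [e ie]]]]]; exists a; split=> //; split; first by move=> n; apply: DD.
  split=> //.
  exists e; have -> : (fun n => f' (a n)) = (fun n => f (a n)) => //.
  by apply: functional_extensionality => n; apply: ff.
split=> //; split.
  split; first exact: SigmaDom_sub.
  split=> u v hu hv; [apply: mD'|apply: vD']; exact: inc.
move=> a x e da Da ia ie; apply: (hg a x e da) => //; first by move=> n; apply: DD.
have -> : (fun n => f' (a n)) = (fun n => f (a n)) => //.
by apply: functional_extensionality => n; apply: ff.
Qed.
End Lat.
Set Implicit Arguments.
Unset Strict Implicit.
Unset Printing Implicit Defensive.
Section Hier.
Context {d : Order.disp_t} {V : latticeType d} {E : porderZmodType}.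
Context (HV : sigma_distributive V) (HE : po_group E) (HR : R_complete E).
Context {dT : Order.disp_t} {T : orderType dT}.
Context (wfT : well_founded (fun x y : T => (x < y)%O)).

Definition hier_at (L : V -> Prop) (phi : V -> E) (F : T -> stage) (a : T) : Prop :=
  (is_zero a ->
     piOK (F a) /\ same_map (piD (F a)) (pif (F a)) L phi /\
     sgOK (F a) /\ same_map (sgD (F a)) (sgf (F a)) L phi) /\
  (forall b, succ_of b a ->
     (piOK (F a) <-> sgOK (F b) /\ Pi_extendible (sgD (F b)) (sgf (F b))) /\
     (piOK (F a) ->
        (forall x, piD (F a) x <-> PiDom (sgD (F b)) (sgf (F b)) x) /\
        PiExt (sgD (F b)) (sgf (F b)) (pif (F a))) /\
     (sgOK (F a) <-> piOK (F b) /\ Sigma_extendible (piD (F b)) (pif (F b))) /\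
     (sgOK (F a) ->
        (forall x, sgD (F a) x <-> SigmaDom (piD (F b)) (pif (F b)) x) /\
        SigmaExt (piD (F b)) (pif (F b)) (sgf (F a)))) /\
  (is_limit a ->
     (piOK (F a) <-> forall b, b < a -> piOK (F b)) /\
     (piOK (F a) ->
        (forall x, piD (F a) x <-> exists2 b, b < a & piD (F b) x) /\
        (forall b x, b < a -> piD (F b) x -> pif (F a) x = pif (F b) x)) /\
     (sgOK (F a) <-> forall b, b < a -> sgOK (F b)) /\
     (sgOK (F a) ->
        (forall x, sgD (F a) x <-> exists2 b, b < a & sgD (F b) x) /\
        (forall b x, b < a -> sgD (F b) x -> sgf (F a) x = sgf (F b) x))).

Lemma hierE L phi F : hierarchy L phi F <-> forall a, hier_at L phi F a.
Proof. by []. Qed.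

Lemma trich (a : T) : is_zero a \/ (exists b, succ_of b a) \/ is_limit a.
Proof.
case: (classic (is_zero a)) => [|nz]; first by left.
right; case: (classic (exists b, succ_of b a)) => [|ns]; first by left.
right; split => // b ba.
apply: NNPP => hn; apply: ns; exists b; split => // c ca.
case: (leP c b) => // bc; exfalso; apply: hn; by exists c.
Qed.

Lemma succ_uniq (b b' a : T) : succ_of b a -> succ_of b' a -> b = b'.
Proof.
move=> [ba hb] [ba' hb']; apply/eqP; rewrite eq_le (hb' _ ba) (hb _ ba') //.
Qed.

Lemma limit_nsucc (a b : T) : is_limit a -> succ_of b a -> False.
Proof.
move=> [_ hl] [ba hc]; have [c [bc ca]] := hl b ba.
by have := hc c ca; rewrite leNgt bc.
Qed.

Lemma zero_nlt (a b : T) : is_zero a -> b < a -> False.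
Proof. by move=> z; apply: z. Qed.

Lemma ext_tr (D1 D2 D3 : V -> Prop) (f1 f2 f3 : V -> E) :
  extends D1 f1 D2 f2 -> extends D2 f2 D3 f3 -> extends D1 f1 D3 f3.
Proof.
move=> [i1 e1] [i2 e2]; split=> x hx; first by apply: i2; apply: i1.
by rewrite e2 ?e1 //; apply: i1.
Qed.

Lemma ext_sub (D D' : V -> Prop) (f : V -> E) :
  (forall x, D x -> D' x) -> extends D f D' f.
Proof. by move=> h; split. Qed.

Lemma same_ext (D D' : V -> Prop) (f f' : V -> E) :
  same_map D f D' f' -> extends D f D' f' /\ extends D' f' D f.
Proof.
move=> [h1 h2]; split; split => x hx; try by apply/h1.
  by rewrite h2.
by rewrite h2 //; apply/h1.
Qed.

Lemma val_tr (D D' : V -> Prop) (f f' : V -> E) :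
  (forall x, D x <-> D' x) -> (forall x, D x -> f x = f' x) ->
  is_valuation D' f' -> is_valuation D f.
Proof.
move=> eq ef [s [m v]].
have sD : sublattice D.
  move=> x y /eq hx /eq hy; have [h1 h2] := s x y hx hy; split; exact/eq.
split=> //; split.
  move=> x y hx hy xy; rewrite !ef //; apply: m => //; exact/eq.
move=> x y hx hy; have [h1 h2] := sD x y hx hy.
by rewrite !ef //; apply: v; apply/eq.
Qed.

Lemma inf_const (x : V) : vs_is_inf (fun _ : nat => x) x.
Proof. by split; [move=> n; exact: lexx | move=> y h; exact: h 0%N]. Qed.
Lemma sup_const (x : V) : vs_is_sup (fun _ : nat => x) x.
Proof. by split; [move=> n; exact: lexx | move=> y h; exact: h 0%N]. Qed.
Lemma inf_constE (x : E) : vs_is_inf (fun _ : nat => x) x.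
Proof. by split; [move=> n; exact: lexx | move=> y h; exact: h 0%N]. Qed.
Lemma sup_constE (x : E) : vs_is_sup (fun _ : nat => x) x.
Proof. by split; [move=> n; exact: lexx | move=> y h; exact: h 0%N]. Qed.

Lemma const_pi (D : V -> Prop) (f g : V -> E) x :
  PiExt D f g -> D x -> PiDom D f x /\ g x = f x.
Proof.
move=> [_ h] Dx; split.
  exists (fun _ => x); split; first by move=> n.
  split => //; split; first exact: inf_const.
  exists (f x); exact: inf_constE.
apply: (h (fun _ => x)) => //; [exact: inf_const|exact: inf_constE].
Qed.

Lemma const_sg (D : V -> Prop) (f g : V -> E) x :
  SigmaExt D f g -> D x -> SigmaDom D f x /\ g x = f x.
Proof.
move=> [_ h] Dx; split.
  exists (fun _ => x); split; first by move=> n.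
  split => //; split; first exact: sup_const.
  exists (f x); exact: sup_constE.
apply: (h (fun _ => x)) => //; [exact: sup_const|exact: sup_constE].
Qed.

Lemma Pi_uniq (D : V -> Prop) (f g1 g2 : V -> E) x :
  PiExt D f g1 -> PiExt D f g2 -> PiDom D f x -> g1 x = g2 x.
Proof.
move=> [_ h1] [_ h2] [a [da [Da [ia [e ie]]]]].
by rewrite (h1 a x e) // (h2 a x e).
Qed.

Lemma Sg_uniq (D : V -> Prop) (f g1 g2 : V -> E) x :
  SigmaExt D f g1 -> SigmaExt D f g2 -> SigmaDom D f x -> g1 x = g2 x.
Proof.
move=> [_ h1] [_ h2] [a [da [Da [ia [e ie]]]]].
by rewrite (h1 a x e) // (h2 a x e).
Qed.


Definition VN (F : T -> @stage _ V E) (a : T) : Prop :=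
 (piOK (F a) -> is_valuation (piD (F a)) (pif (F a))) /\
 (sgOK (F a) -> is_valuation (sgD (F a)) (sgf (F a))) /\
 (forall b, b < a -> piOK (F a) -> piOK (F b) /\ sgOK (F b) /\
     extends (piD (F b)) (pif (F b)) (piD (F a)) (pif (F a)) /\
     extends (sgD (F b)) (sgf (F b)) (piD (F a)) (pif (F a))) /\
 (forall b, b < a -> sgOK (F a) -> piOK (F b) /\ sgOK (F b) /\
     extends (piD (F b)) (pif (F b)) (sgD (F a)) (sgf (F a)) /\
     extends (sgD (F b)) (sgf (F b)) (sgD (F a)) (sgf (F a))).

Lemma step_pi L phi F b :
  (forall c, c <= b -> hier_at L phi F c) -> VN F b -> (forall c, c < b -> VN F c) ->
  sgOK (F b) -> forall g, PiExt (sgD (F b)) (sgf (F b)) g ->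
  piOK (F b) /\ extends (piD (F b)) (pif (F b)) (PiDom (sgD (F b)) (sgf (F b))) g.
Proof.
move=> Hh [Vp [Vs [Np Ns]]] IH sb g hg.
have [Hz [Hs Hl]] := Hh b (lexx b).
case: (trich b) => [zb | [[c scb] | lb]].
- have [pb [smp [_ sms]]] := Hz zb; split=> //.
  have [e1 _] := same_ext smp; have [_ e2] := same_ext sms.
  apply: ext_tr (ext_tr e1 e2) _.
  by split => x hx; [exact: (const_pi hg hx).1 | exact: (const_pi hg hx).2].
- have [pOK [pD [sOK sD]]] := Hs c scb.
  have cb : c < b := scb.1.
  have [pc [sc [_ esc]]] := Ns c cb sb.
  have [_ [Vsc _]] := IH c cb.
  have [hK hKd] := K_pi HV HE HR _ _ _ _ _ (Vsc sc) esc.1 esc.2 hg.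
  have pb : piOK (F b) by apply/pOK; split => //; exists g.
  split => //; have [eqD hpe] := pD pb.
  split => x hx; first by apply: hKd; exact/eqD.
  by apply: (Pi_uniq hK hpe); exact/eqD.
- have [pOK [pD [sOK sD]]] := Hl lb.
  have pb : piOK (F b) by apply/pOK => c cb; exact: (Ns c cb sb).1.
  split => //; have [eqD hv] := pD pb.
  split => x /eqD [c cb hx]; have [_ [_ [[i e] _]]] := Ns c cb sb.
    exact: (const_pi hg (i x hx)).1.
  by rewrite (const_pi hg (i x hx)).2 (e x hx) (hv c x cb hx).
Qed.

Lemma step_sg L phi F b :
  (forall c, c <= b -> hier_at L phi F c) -> VN F b -> (forall c, c < b -> VN F c) ->
  piOK (F b) -> forall g, SigmaExt (piD (F b)) (pif (F b)) g ->
  sgOK (F b) /\ extends (sgD (F b)) (sgf (F b)) (SigmaDom (piD (F b)) (pif (F b))) g.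
Proof.
move=> Hh [Vp [Vs [Np Ns]]] IH pb g hg.
have [Hz [Hs Hl]] := Hh b (lexx b).
case: (trich b) => [zb | [[c scb] | lb]].
- have [_ [smp [sb sms]]] := Hz zb; split=> //.
  have [e1 _] := same_ext sms; have [_ e2] := same_ext smp.
  apply: ext_tr (ext_tr e1 e2) _.
  by split => x hx; [exact: (const_sg hg hx).1 | exact: (const_sg hg hx).2].
- have [pOK [pD [sOK sD]]] := Hs c scb.
  have cb : c < b := scb.1.
  have [pc [sc [epc _]]] := Np c cb pb.
  have [Vpc _] := IH c cb.
  have [hK hKd] := K_sg HV HE HR _ _ _ _ _ (Vpc pc) epc.1 epc.2 hg.
  have sb : sgOK (F b) by apply/sOK; split => //; exists g.
  split => //; have [eqD hpe] := sD sb.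
  split => x hx; first by apply: hKd; exact/eqD.
  by apply: (Sg_uniq hK hpe); exact/eqD.
- have [pOK [pD [sOK sD]]] := Hl lb.
  have sb : sgOK (F b) by apply/sOK => c cb; exact: (Np c cb pb).2.1.
  split => //; have [eqD hv] := sD sb.
  split => x /eqD [c cb hx]; have [_ [_ [_ [i e]]]] := Np c cb pb.
    exact: (const_sg hg (i x hx)).1.
  by rewrite (const_sg hg (i x hx)).2 (e x hx) (hv c x cb hx).
Qed.
Lemma VN_all L phi F (vL : is_valuation L phi) :
  forall a, (forall b, b <= a -> hier_at L phi F b) -> VN F a.
Proof.
move=> a; elim/(well_founded_ind wfT): a => a IH Hh.
have Hhb : forall b, b < a -> forall c, c <= b -> hier_at L phi F c.
  by move=> b ba c cb; apply: Hh; exact: le_trans cb (ltW ba).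
have IHb : forall b, b < a -> VN F b.
  by move=> b ba; apply: IH => //; exact: Hhb.
have IHbb : forall b, b < a -> forall c, c < b -> VN F c.
  by move=> b ba c cb; apply: IHb; exact: lt_trans cb ba.
have [Hz [Hs Hl]] := Hh a (lexx a).
case: (trich a) => [za | [[b sba] | la]].
- have [pa [smp [sa sms]]] := Hz za.
  split; first by move=> _; apply: (val_tr smp.1 smp.2 vL).
  split; first by move=> _; apply: (val_tr sms.1 sms.2 vL).
  by split => b ba; exfalso; exact: zero_nlt za ba.
- have ba := sba.1.
  have [pOK [pD [sOK sD]]] := Hs b sba.
  have [Vpb [Vsb [Npb Nsb]]] := IHb b ba.
  have le_b : forall c, c < a -> c = b \/ c < b.
    move=> c ca; have := sba.2 c ca; rewrite le_eqVlt => /orP [/eqP ->|]; by [left|right].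
  split.
    move=> pa; have [eqD hpe] := pD pa.
    exact: (val_tr eqD (fun x _ => erefl) hpe.1).
  split.
    move=> sa; have [eqD hse] := sD sa.
    exact: (val_tr eqD (fun x _ => erefl) hse.1).
  split.
    move=> c ca pa; have [sb _] := pOK.1 pa; have [eqD hpe] := pD pa.
    have eSP : extends (sgD (F b)) (sgf (F b)) (piD (F a)) (pif (F a)).
      by split => x hx; [apply/eqD; exact: (const_pi hpe hx).1 | exact: (const_pi hpe hx).2].
    have [pb ePP] := step_pi (Hhb b ba) (IHb b ba) (IHbb b ba) sb hpe.
    have ePP' := ext_tr ePP (ext_sub (pif (F a)) (fun x hx => (eqD x).2 hx)).
    case: (le_b c ca) => [->|cb]; first by [].
    have [pc [sc [e1 e2]]] := Nsb c cb sb.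
    by split => //; split => //; split; [exact: ext_tr e1 eSP | exact: ext_tr e2 eSP].
  move=> c ca sa; have [pb _] := sOK.1 sa; have [eqD hse] := sD sa.
  have ePS : extends (piD (F b)) (pif (F b)) (sgD (F a)) (sgf (F a)).
    by split => x hx; [apply/eqD; exact: (const_sg hse hx).1 | exact: (const_sg hse hx).2].
  have [sb eSS] := step_sg (Hhb b ba) (IHb b ba) (IHbb b ba) pb hse.
  have eSS' := ext_tr eSS (ext_sub (sgf (F a)) (fun x hx => (eqD x).2 hx)).
  case: (le_b c ca) => [->|cb]; first by [].
  have [pc [sc [e1 e2]]] := Npb c cb pb.
  by split => //; split => //; split; [exact: ext_tr e1 ePS | exact: ext_tr e2 ePS].
- have [pOK [pD [sOK sD]]] := Hl la.
  have common_pi : piOK (F a) -> forall b c x y, b < a -> c < a ->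
      piD (F b) x -> piD (F c) y -> exists m, [/\ m < a, piD (F m) x & piD (F m) y].
    move=> pa b c x y ba ca hx hy.
    case: (leP b c) => [bc|cb].
      move: bc; rewrite le_eqVlt => /orP [/eqP eb|bc].
        by exists c; split => //; rewrite -eb.
      have [_ [_ [[i _] _]]] := (IHb c ca).2.2.1 b bc (pOK.1 pa c ca).
      by exists c; split => //; exact: i.
    have [_ [_ [[i _] _]]] := (IHb b ba).2.2.1 c cb (pOK.1 pa b ba).
    by exists b; split => //; exact: i.
  have common_sg : sgOK (F a) -> forall b c x y, b < a -> c < a ->
      sgD (F b) x -> sgD (F c) y -> exists m, [/\ m < a, sgD (F m) x & sgD (F m) y].
    move=> sa b c x y ba ca hx hy.
    case: (leP b c) => [bc|cb].
      move: bc; rewrite le_eqVlt => /orP [/eqP eb|bc].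
        by exists c; split => //; rewrite -eb.
      have [_ [_ [_ [i _]]]] := (IHb c ca).2.2.2 b bc (sOK.1 sa c ca).
      by exists c; split => //; exact: i.
    have [_ [_ [_ [i _]]]] := (IHb b ba).2.2.2 c cb (sOK.1 sa b ba).
    by exists b; split => //; exact: i.
  split.
    move=> pa; have [eqD hv] := pD pa.
    have vm : forall m, m < a -> is_valuation (piD (F m)) (pif (F m)).
      by move=> m ma; apply: (IHb m ma).1; exact: pOK.1 pa m ma.
    have sl : sublattice (piD (F a)).
      move=> x y /eqD [b ba hx] /eqD [c ca hy].
      have [m [ma hmx hmy]] := common_pi pa b c x y ba ca hx hy.
      have [h1 h2] := (vm m ma).1 x y hmx hmy.
      by split; apply/eqD; exists m.
    split => //; split.
      move=> x y /eqD [b ba hx] /eqD [c ca hy] xy.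
      have [m [ma hmx hmy]] := common_pi pa b c x y ba ca hx hy.
      rewrite (hv m x ma hmx) (hv m y ma hmy); exact: (vm m ma).2.1.
    move=> x y /eqD [b ba hx] /eqD [c ca hy].
    have [m [ma hmx hmy]] := common_pi pa b c x y ba ca hx hy.
    have [h1 h2] := (vm m ma).1 x y hmx hmy.
    rewrite (hv m x ma hmx) (hv m y ma hmy) (hv m _ ma h1) (hv m _ ma h2).
    exact: (vm m ma).2.2.
  split.
    move=> sa; have [eqD hv] := sD sa.
    have vm : forall m, m < a -> is_valuation (sgD (F m)) (sgf (F m)).
      by move=> m ma; apply: (IHb m ma).2.1; exact: sOK.1 sa m ma.
    have sl : sublattice (sgD (F a)).
      move=> x y /eqD [b ba hx] /eqD [c ca hy].
      have [m [ma hmx hmy]] := common_sg sa b c x y ba ca hx hy.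
      have [h1 h2] := (vm m ma).1 x y hmx hmy.
      by split; apply/eqD; exists m.
    split => //; split.
      move=> x y /eqD [b ba hx] /eqD [c ca hy] xy.
      have [m [ma hmx hmy]] := common_sg sa b c x y ba ca hx hy.
      rewrite (hv m x ma hmx) (hv m y ma hmy); exact: (vm m ma).2.1.
    move=> x y /eqD [b ba hx] /eqD [c ca hy].
    have [m [ma hmx hmy]] := common_sg sa b c x y ba ca hx hy.
    have [h1 h2] := (vm m ma).1 x y hmx hmy.
    rewrite (hv m x ma hmx) (hv m y ma hmy) (hv m _ ma h1) (hv m _ ma h2).
    exact: (vm m ma).2.2.
  split.
    move=> c ca pa; have [eqD hv] := pD pa.
    have ePa : forall m, m < a -> extends (piD (F m)) (pif (F m)) (piD (F a)) (pif (F a)).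
      by move=> m ma; split => x hx; [apply/eqD; exists m | exact: hv m x ma hx].
    have [c' [cc' c'a]] := la.2 c ca.
    have [_ [sc [_ e2]]] := (IHb c' c'a).2.2.1 c cc' (pOK.1 pa c' c'a).
    by split; [exact: pOK.1 pa c ca|split => //; split; [exact: ePa c ca|exact: ext_tr e2 (ePa c' c'a)]].
  move=> c ca sa; have [eqD hv] := sD sa.
  have eSa : forall m, m < a -> extends (sgD (F m)) (sgf (F m)) (sgD (F a)) (sgf (F a)).
    by move=> m ma; split => x hx; [apply/eqD; exists m | exact: hv m x ma hx].
  have [c' [cc' c'a]] := la.2 c ca.
  have [pc [_ [e1 _]]] := (IHb c' c'a).2.2.2 c cc' (sOK.1 sa c' c'a).
  by split => //; split; [exact: sOK.1 sa c ca|split; [exact: ext_tr e1 (eSa c' c'a)|exact: eSa c ca]].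
Qed.
Lemma claim L phi C psi (vL : is_valuation L phi) (Hext : extends L phi C psi)
  (Fphi Fpsi : T -> @stage _ V E) :
  hierarchy L phi Fphi -> hierarchy C psi Fpsi -> forall a,
  (piOK (Fpsi a) -> piOK (Fphi a)) /\
  (piOK (Fphi a) -> piOK (Fpsi a) ->
     extends (piD (Fphi a)) (pif (Fphi a)) (piD (Fpsi a)) (pif (Fpsi a))) /\
  (sgOK (Fpsi a) -> sgOK (Fphi a)) /\
  (sgOK (Fphi a) -> sgOK (Fpsi a) ->
     extends (sgD (Fphi a)) (sgf (Fphi a)) (sgD (Fpsi a)) (sgf (Fpsi a))).
Proof.
move=> H1 H2 a; elim/(well_founded_ind wfT): a => a IH.
have VNa : forall b, VN Fphi b by move=> b; apply: (VN_all vL) => c _; exact: H1.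
have [Hz1 [Hs1 Hl1]] := H1 a; have [Hz2 [Hs2 Hl2]] := H2 a.
case: (trich a) => [za | [[b sba] | la]].
- have [p1 [m1 [s1 n1]]] := Hz1 za; have [p2 [m2 [s2 n2]]] := Hz2 za.
  split; first by [].
  split; first by move=> _ _; exact: ext_tr (ext_tr (same_ext m1).1 Hext) (same_ext m2).2.
  split; first by [].
  by move=> _ _; exact: ext_tr (ext_tr (same_ext n1).1 Hext) (same_ext n2).2.
- have ba := sba.1.
  have [ip1 [ip2 [is1 is2]]] := IH b ba.
  have [pOK1 [pD1 [sOK1 sD1]]] := Hs1 b sba.
  have [pOK2 [pD2 [sOK2 sD2]]] := Hs2 b sba.
  have [Vpb [Vsb _]] := VNa b.
  have keyPi : sgOK (Fphi b) -> sgOK (Fpsi b) -> forall g,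
      PiExt (sgD (Fpsi b)) (sgf (Fpsi b)) g ->
      PiExt (sgD (Fphi b)) (sgf (Fphi b)) g /\
      (forall x, PiDom (sgD (Fphi b)) (sgf (Fphi b)) x -> PiDom (sgD (Fpsi b)) (sgf (Fpsi b)) x).
    move=> s1 s2 g hg; have e := is2 s1 s2.
    exact: (K_pi HV HE HR _ _ _ _ _ (Vsb s1) e.1 e.2 hg).
  have keySg : piOK (Fphi b) -> piOK (Fpsi b) -> forall g,
      SigmaExt (piD (Fpsi b)) (pif (Fpsi b)) g ->
      SigmaExt (piD (Fphi b)) (pif (Fphi b)) g /\
      (forall x, SigmaDom (piD (Fphi b)) (pif (Fphi b)) x -> SigmaDom (piD (Fpsi b)) (pif (Fpsi b)) x).
    move=> s1 s2 g hg; have e := ip2 s1 s2.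
    exact: (K_sg HV HE HR _ _ _ _ _ (Vpb s1) e.1 e.2 hg).
  split.
    move=> p2; have [s2 [g hg]] := pOK2.1 p2; have s1 := is1 s2.
    by apply/pOK1; split => //; exists g; exact: (keyPi s1 s2 g hg).1.
  split.
    move=> p1 p2; have [s1 _] := pOK1.1 p1; have [s2 _] := pOK2.1 p2.
    have [eq1 h1] := pD1 p1; have [eq2 h2] := pD2 p2.
    have [k1 k2] := keyPi s1 s2 _ h2.
    split => x hx; first by apply/eq2; apply: k2; exact/eq1.
    by apply: (Pi_uniq k1 h1); exact/eq1.
  split.
    move=> p2; have [s2 [g hg]] := sOK2.1 p2; have s1 := ip1 s2.
    by apply/sOK1; split => //; exists g; exact: (keySg s1 s2 g hg).1.
  move=> p1 p2; have [s1 _] := sOK1.1 p1; have [s2 _] := sOK2.1 p2.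
  have [eq1 h1] := sD1 p1; have [eq2 h2] := sD2 p2.
  have [k1 k2] := keySg s1 s2 _ h2.
  split => x hx; first by apply/eq2; apply: k2; exact/eq1.
  by apply: (Sg_uniq k1 h1); exact/eq1.
- have [pOK1 [pD1 [sOK1 sD1]]] := Hl1 la.
  have [pOK2 [pD2 [sOK2 sD2]]] := Hl2 la.
  split.
    by move=> p2; apply/pOK1 => b ba; exact: (IH b ba).1 (pOK2.1 p2 b ba).
  split.
    move=> p1 p2; have [eq1 hv1] := pD1 p1; have [eq2 hv2] := pD2 p2.
    split => x /eq1 [b ba hx]; have [_ [e _]] := IH b ba;
      have [i v] := e (pOK1.1 p1 b ba) (pOK2.1 p2 b ba).
      by apply/eq2; exists b => //; exact: i.
    by rewrite (hv2 b x ba (i x hx)) (hv1 b x ba hx); exact: v.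
  split.
    by move=> p2; apply/sOK1 => b ba; exact: (IH b ba).2.2.1 (sOK2.1 p2 b ba).
  move=> p1 p2; have [eq1 hv1] := sD1 p1; have [eq2 hv2] := sD2 p2.
  split => x /eq1 [b ba hx]; have [_ [_ [_ e]]] := IH b ba;
    have [i v] := e (sOK1.1 p1 b ba) (sOK2.1 p2 b ba).
    by apply/eq2; exists b => //; exact: i.
  by rewrite (hv2 b x ba (i x hx)) (hv1 b x ba hx); exact: v.
Qed.
Section Build.
Variables (L : V -> Prop) (phi : V -> E).

Definition choose_pi (D : V -> Prop) (f : V -> E) : V -> E :=
  match excluded_middle_informative (Pi_extendible D f) with
  | left h => proj1_sig (constructive_indefinite_description _ h)
  | right _ => f end.
Definition choose_sg (D : V -> Prop) (f : V -> E) : V -> E :=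
  match excluded_middle_informative (Sigma_extendible D f) with
  | left h => proj1_sig (constructive_indefinite_description _ h)
  | right _ => f end.

Lemma choose_piP D f : Pi_extendible D f -> PiExt D f (choose_pi D f).
Proof.
rewrite /choose_pi; case: excluded_middle_informative => // h _.
exact: proj2_sig (constructive_indefinite_description _ h).
Qed.
Lemma choose_sgP D f : Sigma_extendible D f -> SigmaExt D f (choose_sg D f).
Proof.
rewrite /choose_sg; case: excluded_middle_informative => // h _.
exact: proj2_sig (constructive_indefinite_description _ h).
Qed.

Definition limval (a : T) (G : {b : T | b < a} -> @stage _ V E)
  (sel : @stage _ V E -> V -> Prop) (val : @stage _ V E -> V -> E) (x : V) : E :=
  match excluded_middle_informative (exists bh, sel (G bh) x) with
  | left h => val (G (proj1_sig (constructive_indefinite_description _ h))) x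
  | right _ => phi x end.

Definition step (a : T) (G0 : forall b : T, b < a -> @stage _ V E) : @stage _ V E :=
  let G := fun bh : {b : T | b < a} => G0 (proj1_sig bh) (proj2_sig bh) in
  match excluded_middle_informative (is_zero a) with
  | left _ => Stage True L phi True L phi
  | right _ =>
    match excluded_middle_informative (exists b, succ_of b a) with
    | left h =>
       let bs := constructive_indefinite_description _ h in
       let s := G0 (proj1_sig bs) (proj1 (proj2_sig bs)) in
       Stage (sgOK s /\ Pi_extendible (sgD s) (sgf s)) (PiDom (sgD s) (sgf s))
             (choose_pi (sgD s) (sgf s))
             (piOK s /\ Sigma_extendible (piD s) (pif s)) (SigmaDom (piD s) (pif s))
             (choose_sg (piD s) (pif s))
    | right _ =>
       Stage (forall bh, piOK (G bh)) (fun x => exists bh, piD (G bh) x) (limval G piD pif)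
             (forall bh, sgOK (G bh)) (fun x => exists bh, sgD (G bh) x) (limval G sgD sgf)
    end
  end.

Definition Fb : T -> @stage _ V E := Fix wfT (fun _ => @stage _ V E) step.

Lemma Fb_eq a : Fb a = @step a (fun b _ => Fb b).
Proof.
rewrite /Fb Fix_eq // => x f g hfg.
have -> // : f = g.
apply: functional_extensionality_dep => y; apply: functional_extensionality_dep => p.
exact: hfg.
Qed.

Lemma Fb_hier (vL : is_valuation L phi) : hierarchy L phi Fb.
Proof.
apply/hierE => a; elim/(well_founded_ind wfT): a => a IH.
have VNb : forall b, b < a -> VN Fb b.
  by move=> b ba; apply: (VN_all vL) => c cb; apply: IH; exact: le_lt_trans cb ba.
rewrite /hier_at (Fb_eq a) /step.
case: excluded_middle_informative => [za|nza] /=.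
  split.
    by move=> _; do !split.
  split; first by move=> b sb; exfalso; exact: zero_nlt za sb.1.
  by move=> [nz _].
case: excluded_middle_informative => [hs|nhs] /=.
  case: (constructive_indefinite_description _ hs) => b0 sb0 /=.
  split; first by [].
  split; last by move=> la; exfalso; exact: limit_nsucc la sb0.
  move=> b sb; have eb := succ_uniq sb0 sb; subst b0.
  split; first by [].
  split; first by move=> [_ h]; split => //; exact: choose_piP.
  split; first by [].
  by move=> [_ h]; split => //; exact: choose_sgP.
split; first by [].
split; first by move=> b sb; exfalso; apply: nhs; exists b.
move=> la.
split.
  by split => [h b ba|h [b ba]]; [exact: h (exist _ b ba)|exact: h b ba].
split.
  move=> pa; split.
    by move=> x; split => [[[b ba] hx]|[b ba hx]]; [exists b|exists (exist _ b ba)].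
  move=> b x ba hx; rewrite /limval; case: excluded_middle_informative => [h|nh]; last first.
    by exfalso; apply: nh; exists (exist _ b ba).
  case: (constructive_indefinite_description _ h) => [[b0 b0a] hx0] /=.
  have pb := pa (exist _ b ba); have pb0 := pa (exist _ b0 b0a); simpl in pb, pb0.
  case: (leP b0 b) => [bb|bb].
    move: bb; rewrite le_eqVlt => /orP [/eqP ->|bb] //.
    have [_ [_ [[_ e] _]]] := (VNb b ba).2.2.1 b0 bb pb.
    by rewrite e.
  have [_ [_ [[_ e] _]]] := (VNb b0 b0a).2.2.1 b bb pb0.
  by rewrite e.
split.
  by split => [h b ba|h [b ba]]; [exact: h (exist _ b ba)|exact: h b ba].
move=> pa; split.
  by move=> x; split => [[[b ba] hx]|[b ba hx]]; [exists b|exists (exist _ b ba)].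
move=> b x ba hx; rewrite /limval; case: excluded_middle_informative => [h|nh]; last first.
  by exfalso; apply: nh; exists (exist _ b ba).
case: (constructive_indefinite_description _ h) => [[b0 b0a] hx0] /=.
have pb := pa (exist _ b ba); have pb0 := pa (exist _ b0 b0a); simpl in pb, pb0.
case: (leP b0 b) => [bb|bb].
  move: bb; rewrite le_eqVlt => /orP [/eqP ->|bb] //.
  have [_ [_ [_ [_ e]]]] := (VNb b ba).2.2.2 b0 bb pb.
  by rewrite e.
have [_ [_ [_ [_ e]]]] := (VNb b0 b0a).2.2.2 b bb pb0.
by rewrite e.
Qed.
End Build.
End Hier.

Unset Implicit Arguments.

Theorem lemma5p34
  (dV : Order.disp_t) (V : latticeType dV) (E : porderZmodType)
  (L C : V -> Prop) (phi psi : V -> E)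
  (HL : valuation_system L phi) (HC : valuation_system C psi)
  (Hext : extends L phi C psi)
  (dT : Order.disp_t) (T : orderType dT)
  (wfT : well_founded (fun x y : T => (x < y)%O))
  (alpha : T) :
  (Pi_alpha_extendible C psi alpha ->
     Pi_alpha_extendible L phi alpha /\
     forall (Fphi Fpsi : T -> stage),
       hierarchy L phi Fphi -> hierarchy C psi Fpsi ->
       piOK (Fphi alpha) -> piOK (Fpsi alpha) ->
       extends (piD (Fphi alpha)) (pif (Fphi alpha))
               (piD (Fpsi alpha)) (pif (Fpsi alpha))) /\
  (Sigma_alpha_extendible C psi alpha ->
     Sigma_alpha_extendible L phi alpha /\
     forall (Fphi Fpsi : T -> stage),
       hierarchy L phi Fphi -> hierarchy C psi Fpsi ->
       sgOK (Fphi alpha) -> sgOK (Fpsi alpha) ->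
       extends (sgD (Fphi alpha)) (sgf (Fphi alpha))
               (sgD (Fpsi alpha)) (sgf (Fpsi alpha))).
Proof.
have [HV [HE [HR vL]]] := HL.
have Hb := Fb_hier HV HE HR wfT vL.
have cl := fun Fphi Fpsi H1 H2 => claim HV HE HR wfT vL Hext (Fphi:=Fphi) (Fpsi:=Fpsi) H1 H2 alpha.
split.
  move=> [Fpsi [H2 p2]]; split.
    by exists (Fb wfT L phi); split => //; exact: (cl _ _ Hb H2).1 p2.
  by move=> Fphi Fpsi' H1 H2'; exact: (cl _ _ H1 H2').2.1.
move=> [Fpsi [H2 p2]]; split.
  by exists (Fb wfT L phi); split => //; exact: (cl _ _ Hb H2).2.2.1 p2.
by move=> Fphi Fpsi' H1 H2'; exact: (cl _ _ H1 H2').2.2.2.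
Qed.
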